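(* Let $P$ be a finite set of points in $\mathbb{R}^2$ in general position, and let $u,v$ be adjacent vertices of the convex hull of $P$. Then $|A(u)\cap A(v)|\le 1$.
   Context: Convex layers: $L^1$ is the set of vertices of the convex hull of $P$, $L^2$ the set of vertices of the convex hull of $P\setminus L^1$. A point $p$ is active for a hull point $u\in L^1$ if, upon deleting $u$ from $P$ and recomputing the first and second convex layers, $p$ moves to the first layer; $A(u)$ denotes the set of points active for $u$. *)

(* Defs.v *)
From HB Require Import structures.
From mathcomp Require Import all_boot all_order all_algebra.
From mathcomp Require Import finmap.
From mathcomp Require Import boolp.
Set Implicit Arguments. Unset Strict Implicit. Unset Printing Implicit Defensive.
Import Order.TTheory GRing.Theory Num.Theory.
Local Open Scope ring_scope.
Local Open Scope fset_scope.

Section ConvexLayers.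
Variable R : realFieldType.

Definition point := (R * R)%type.

Definition orient (a b c : point) : R :=
  (b.1 - a.1) * (c.2 - a.2) - (b.2 - a.2) * (c.1 - a.1).

Definition general_position (P : {fset point}) : Prop :=
  forall a b c, a \in P -> b \in P -> c \in P ->
    a != b -> b != c -> a != c -> orient a b c != 0.

Definition in_hull (S : {fset point}) (p : point) : Prop :=
  exists w : point -> R,
    (forall x, x \in S -> 0 <= w x) /\
    \sum_(x <- S) w x = 1 /\
    \sum_(x <- S) w x * x.1 = p.1 /\
    \sum_(x <- S) w x * x.2 = p.2.

Definition hull_vertex (P : {fset point}) (p : point) : Prop :=
  p \in P /\ ~ in_hull (P `\ p) p.

Definition L1 (P : {fset point}) : {fset point} :=
  [fset p in P | `[< hull_vertex P p >]].

Definition L2 (P : {fset point}) : {fset point} := L1 (P `\` L1 P).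

(* p is active for u: deleting u from P, p moves (from the second layer)
   to the first layer *)
Definition active (P : {fset point}) (u p : point) : Prop :=
  p \in L2 P /\ p \in L1 (P `\ u).

Definition A (P : {fset point}) (u : point) : {fset point} :=
  [fset p in P | `[< active P u p >]].

(* u and v are adjacent vertices of conv P: the segment uv is a hull edge,
   i.e. all points of P lie (weakly) on one side of the line uv *)
Definition hull_adjacent (P : {fset point}) (u v : point) : Prop :=
  u != v /\
  ((forall w, w \in P -> 0 <= orient u v w) \/
   (forall w, w \in P -> orient u v w <= 0)).

End ConvexLayers.

(* Main.v *)
Require Import Defs.
From HB Require Import structures.
From mathcomp Require Import all_boot all_order all_algebra.
From mathcomp Require Import finmap.
From mathcomp Require Import boolp.
From mathcomp Require Import ring lra.
Import Order.TTheory GRing.Theory Num.Theory.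
Set Implicit Arguments. Unset Strict Implicit. Unset Printing Implicit Defensive.
Local Open Scope fset_scope.
Local Open Scope ring_scope.

Section Helpers.
Variable R : realFieldType.
Implicit Types (S T : {fset point R}) (p x : point R).

Lemma hull_mem S x : x \in S -> in_hull S x.
Proof.
move=> xS; exists (fun y => if y == x then 1 else 0); split.
  by move=> y _; case: ifP.
have H (F : point R -> R) : \sum_(y <- S) (if y == x then 1 else 0) * F y = F x.
  rewrite (big_fsetD1 _ xS) /= eqxx mul1r big1_fset ?addr0 //.
  by move=> i; rewrite in_fsetD1 => /andP[/negbTE -> _] _; rewrite mul0r.
split; first by have := H (fun _ => 1); under eq_bigr do rewrite mulr1.
by rewrite H H.
Qed.

Lemma hull_conv3 S a b c p (al be ga : R) :
  in_hull S a -> in_hull S b -> in_hull S c ->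
  0 <= al -> 0 <= be -> 0 <= ga -> al + be + ga = 1 ->
  p.1 = al * a.1 + be * b.1 + ga * c.1 ->
  p.2 = al * a.2 + be * b.2 + ga * c.2 -> in_hull S p.
Proof.
move=> [wa [wa0 [wa1 [wa2 wa3]]]] [wb [wb0 [wb1 [wb2 wb3]]]]
  [wc [wc0 [wc1 [wc2 wc3]]]] al0 be0 ga0 s1 e1 e2.
exists (fun x => al * wa x + be * wb x + ga * wc x); split.
  by move=> x xS; rewrite !addr_ge0 // mulr_ge0 // ?wa0 ?wb0 ?wc0.
split; first by rewrite !big_split /= -!mulr_sumr wa1 wb1 wc1 !mulr1.
split.
  under eq_bigr do rewrite !mulrDl -!mulrA.
  by rewrite !big_split /= -!mulr_sumr wa2 wb2 wc2.
under eq_bigr do rewrite !mulrDl -!mulrA.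
by rewrite !big_split /= -!mulr_sumr wa3 wb3 wc3.
Qed.

Lemma hull_sub S T p : S `<=` T -> in_hull S p -> in_hull T p.
Proof.
move=> sST [w [w0 [w1 [w2 w3]]]].
exists (fun x => if x \in S then w x else 0); split.
  by move=> x _; case: ifP => // xS; apply: w0.
have H (F : point R -> R) : \sum_(x <- T) (if x \in S then w x else 0) * F x
    = \sum_(x <- S) w x * F x.
  rewrite -(big_fset_incl _ sST); last by move=> x _ /negbTE ->; rewrite mul0r.
  by apply: eq_big_seq => x /= ->.
split; first by have := H (fun _ => 1); under eq_bigr do rewrite mulr1;
  under [X in _ = X -> _]eq_bigr do rewrite mulr1; move=> ->.
by rewrite H H.
Qed.


Lemma hull_restrict S y p (w : point R -> R) : y \in S -> w y = 0 ->
  (forall x, x \in S -> 0 <= w x) -> \sum_(x <- S) w x = 1 ->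
  \sum_(x <- S) w x * x.1 = p.1 -> \sum_(x <- S) w x * x.2 = p.2 ->
  in_hull (S `\ y) p.
Proof.
move=> yS wy w0 w1 w2 w3; exists w; split.
  by move=> x; rewrite in_fsetD1 => /andP[_ /w0].
by rewrite -w1 -w2 -w3 !(big_fsetD1 _ yS) /= wy !mul0r !add0r.
Qed.

Lemma decomp (P : {fset point R}) p u v :
  general_position P -> p \in P -> u \in P -> v \in P ->
  p != u -> p != v -> u != v ->
  in_hull (P `\ p) p -> ~ in_hull (P `\ p `\ u) p -> ~ in_hull (P `\ p `\ v) p ->
  exists r s t, in_hull (P `\ p `\ u `\ v) r /\ 0 < s /\ 0 < t /\
    r.1 = p.1 + s * (p.1 - u.1) + t * (p.1 - v.1) /\
    r.2 = p.2 + s * (p.2 - u.2) + t * (p.2 - v.2).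
Proof.
move=> gp pP uP vP pu pv uv [w [w0 [w1 [w2 w3]]]] nu nv.
have uS0 : u \in P `\ p by rewrite in_fsetD1 eq_sym pu uP.
have vS0 : v \in P `\ p by rewrite in_fsetD1 eq_sym pv vP.
have vS1 : v \in P `\ p `\ u by rewrite in_fsetD1 eq_sym uv vS0.
have uS1 : u \in P `\ p `\ v by rewrite in_fsetD1 uv uS0.
have wu : 0 < w u.
  rewrite lt0r w0 // andbT; apply/eqP => wu0; apply: nu.
  exact: (hull_restrict uS0 wu0 w0 w1 w2 w3).
have wv : 0 < w v.
  rewrite lt0r w0 // andbT; apply/eqP => wv0; apply: nv.
  exact: (hull_restrict vS0 wv0 w0 w1 w2 w3).
set S3 := P `\ p `\ u `\ v.
have S3S0 x : x \in S3 -> x \in P `\ p.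
  by rewrite /S3 !in_fsetD1 => /and3P[_ _ ->].
have spl (F : point R -> R) : \sum_(x <- P `\ p) F x =
    F u + F v + \sum_(x <- S3) F x.
  by rewrite (big_fsetD1 _ uS0) (big_fsetD1 _ vS1) /= addrA.
rewrite spl in w1; rewrite spl in w2; rewrite spl in w3.
set W := \sum_(x <- S3) w x in w1.
set X := \sum_(x <- S3) w x * x.1 in w2.
set Y := \sum_(x <- S3) w x * x.2 in w3.
have W0 : 0 <= W by rewrite /W big_seq; apply: sumr_ge0 => x /S3S0 /w0.
have [Weq0|Wne0] := eqVneq W 0.
  exfalso.
  have all0 : forall x, x \in S3 -> w x = 0.
    move: Weq0; rewrite /W big_seq => /eqP; rewrite psumr_eq0; last first.
      by move=> x /S3S0 /w0.
    by move=> /allP H x xS; have := H x xS; rewrite xS /= => /eqP.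
  have X0 : X = 0 by rewrite /X big_seq big1 // => x /all0 ->; rewrite mul0r.
  have Y0 : Y = 0 by rewrite /Y big_seq big1 // => x /all0 ->; rewrite mul0r.
  have vp : v != p by rewrite eq_sym.
  have up : u != p by rewrite eq_sym.
  have := gp u v p uP vP pP uv vp up; apply/negP.
  rewrite negbK /orient -w2 -w3 X0 Y0.
  have -> : w v = 1 - w u by move: w1; rewrite Weq0; lra.
  apply/eqP; ring.
have Wpos : 0 < W by rewrite lt0r Wne0.
exists (X / W, Y / W), (w u / W), (w v / W); split.
  exists (fun x => w x / W); split.
    by move=> x /S3S0 /w0 H; rewrite divr_ge0.
  split; first by rewrite -mulr_suml divff.
  by split; rewrite /=; under eq_bigr do rewrite mulrAC; rewrite -mulr_suml.
do 2 (split; first by rewrite divr_gt0).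
rewrite /= -w2 -w3.
have -> : w u = 1 - w v - W by lra.
by split; field.
Qed.


Lemma combo (p1 p2 x1 x2 y1 y2 z1 z2 l1 l2 l3 : R) :
  0 <= l1 -> 0 <= l2 -> 0 <= l3 -> 0 < l1 + l2 + l3 ->
  l1 * (x1 - p1) + l2 * (y1 - p1) + l3 * (z1 - p1) = 0 ->
  l1 * (x2 - p2) + l2 * (y2 - p2) + l3 * (z2 - p2) = 0 ->
  exists a b c, 0 <= a /\ 0 <= b /\ 0 <= c /\ a + b + c = 1 /\
     p1 = a * x1 + b * y1 + c * z1 /\ p2 = a * x2 + b * y2 + c * z2.
Proof.
move=> h1 h2 h3 hN e1 e2.
set N := l1 + l2 + l3 in hN.
have Nne0 : N != 0 by rewrite gt_eqF.
exists (l1 / N), (l2 / N), (l3 / N).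
refine (conj _ (conj _ (conj _ (conj _ (conj _ _))))).
- by rewrite divr_ge0 // ltW.
- by rewrite divr_ge0 // ltW.
- by rewrite divr_ge0 // ltW.
- by rewrite /N; field; rewrite -/N.
- have E : l1 * x1 + l2 * y1 + l3 * z1 - p1 * N
      = l1 * (x1 - p1) + l2 * (y1 - p1) + l3 * (z1 - p1) by rewrite /N; ring.
  rewrite e1 in E; move/eqP: E; rewrite subr_eq0 => /eqP E.
  rewrite (_ : l1 / N * x1 + l2 / N * y1 + l3 / N * z1
     = (l1 * x1 + l2 * y1 + l3 * z1) / N); last by field.
  by rewrite E mulfK.
- have E : l1 * x2 + l2 * y2 + l3 * z2 - p2 * N
      = l1 * (x2 - p2) + l2 * (y2 - p2) + l3 * (z2 - p2) by rewrite /N; ring.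
  rewrite e2 in E; move/eqP: E; rewrite subr_eq0 => /eqP E.
  rewrite (_ : l1 / N * x2 + l2 / N * y2 + l3 / N * z2
     = (l1 * x2 + l2 * y2 + l3 * z2) / N); last by field.
  by rewrite E mulfK.
Qed.

Lemma geo (p1 p2 u1 u2 v1 v2 q1 q2 r1 r2 s t sg ta : R) :
  0 < s -> 0 < t -> sg != 0 -> ta != 0 -> ~ (0 < sg /\ 0 < ta) ->
  r1 = p1 + s * (p1 - u1) + t * (p1 - v1) ->
  r2 = p2 + s * (p2 - u2) + t * (p2 - v2) ->
  q1 = p1 + sg * (p1 - u1) + ta * (p1 - v1) ->
  q2 = p2 + sg * (p2 - u2) + ta * (p2 - v2) ->
  (exists a b c, 0 <= a /\ 0 <= b /\ 0 <= c /\ a + b + c = 1 /\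
     p1 = a * q1 + b * v1 + c * r1 /\ p2 = a * q2 + b * v2 + c * r2) \/
  (exists a b c, 0 <= a /\ 0 <= b /\ 0 <= c /\ a + b + c = 1 /\
     p1 = a * u1 + b * q1 + c * r1 /\ p2 = a * u2 + b * q2 + c * r2).
Proof.
move=> s0 t0 sg0 ta0 nboth -> -> -> ->.
have [h|h] := boolP ((sg < 0) && (0 <= s * ta - sg * t)).
  case/andP: h => h1 h2; left.
  apply: (@combo _ _ _ _ _ _ _ _ s (s * ta - sg * t) (- sg)).
  - exact: ltW.
  - exact: h2.
  - by rewrite oppr_ge0 ltW.
  - have : 0 < - sg by rewrite oppr_gt0.
    lra.
  - ring.
  - ring.
right.
have [ta_neg hpos] : ta < 0 /\ 0 <= sg * t - ta * s.
  have [sgn|sgp] : sg < 0 \/ 0 < sg.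
    case: (ltgtP sg 0) => [a|a|e]; [by left|by right|by move: sg0; rewrite e eqxx].
  - have h' : s * ta - sg * t < 0 by move: h; rewrite sgn /= leNgt negbK.
    split; last by nra.
    case: (ltgtP ta 0) => // [tap|e]; last by move: ta0; rewrite e eqxx.
    nra.
  - case: (ltgtP ta 0) => [tan|tap|e]; last by move: ta0; rewrite e eqxx.
    + split => //; nra.
    + by exfalso; apply: nboth.
apply: (@combo _ _ _ _ _ _ _ _ (sg * t - ta * s) t (- ta)).
- exact: hpos.
- exact: ltW.
- by rewrite oppr_ge0 ltW.
- have : 0 < - ta by rewrite oppr_gt0.
  lra.
- ring.
- ring.
Qed.

Lemma U_var (p1 p2 u1 u2 v1 v2 q1 q2 sg ta : R) :
  0 < sg -> 0 < ta ->
  (p1 - u1) * (p2 - v2) - (p2 - u2) * (p1 - v1) != 0 ->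
  q1 = p1 + sg * (p1 - u1) + ta * (p1 - v1) ->
  q2 = p2 + sg * (p2 - u2) + ta * (p2 - v2) ->
  ((p1 - q1) * (q2 - v2) - (p2 - q2) * (q1 - v1)) /
  ((q1 - u1) * (q2 - v2) - (q2 - u2) * (q1 - v1)) < 0.
Proof.
move=> sgp tap D0 -> ->.
set D := (p1 - u1) * (p2 - v2) - (p2 - u2) * (p1 - v1) in D0.
have k0 : 1 + sg + ta != 0 by rewrite gt_eqF //; lra.
rewrite (_ : (p1 - _) * _ - _ = - sg * D); last by rewrite /D; ring.
rewrite (_ : (_ - u1) * _ - _ = (1 + sg + ta) * D); last by rewrite /D; ring.
rewrite invfM mulrACA divff // mulr1 mulNr oppr_lt0 divr_gt0 //; lra.
Qed.


Definition dlt (p u v : point R) :=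
  (p.1 - u.1) * (p.2 - v.2) - (p.2 - u.2) * (p.1 - v.1).
Definition sig (p u v q : point R) :=
  ((q.1 - p.1) * (p.2 - v.2) - (q.2 - p.2) * (p.1 - v.1)) / dlt p u v.
Definition tau (p u v q : point R) :=
  ((p.1 - u.1) * (q.2 - p.2) - (p.2 - u.2) * (q.1 - p.1)) / dlt p u v.

Lemma dlt_ne0 (P : {fset point R}) p u v : general_position P ->
  p \in P -> u \in P -> v \in P -> p != u -> p != v -> u != v -> dlt p u v != 0.
Proof.
move=> gp pP uP vP pu pv uv.
have vp : v != p by rewrite eq_sym.
have up : u != p by rewrite eq_sym.
have := gp u v p uP vP pP uv vp up.
by rewrite (_ : orient u v p = dlt p u v) // /orient /dlt; ring.
Qed.

Lemma q_eqs p u v q : dlt p u v != 0 ->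
  q.1 = p.1 + sig p u v q * (p.1 - u.1) + tau p u v q * (p.1 - v.1) /\
  q.2 = p.2 + sig p u v q * (p.2 - u.2) + tau p u v q * (p.2 - v.2).
Proof. by rewrite /sig /tau /dlt => D0; split; field. Qed.

Lemma final (P : {fset point R}) p u v q : general_position P ->
  p \in P -> u \in P -> v \in P -> q \in P ->
  p != u -> p != v -> u != v -> q != p -> q != u -> q != v ->
  in_hull (P `\ p) p -> ~ in_hull (P `\ p `\ u) p -> ~ in_hull (P `\ p `\ v) p ->
  ~ (0 < sig p u v q /\ 0 < tau p u v q) -> False.
Proof.
move=> gp pP uP vP qP pu pv uv qp qu qv hp nu nv nboth.
have [r [s [t [hr [s0 [t0 [r1 r2]]]]]]] := decomp gp pP uP vP pu pv uv hp nu nv.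
have D0 := dlt_ne0 gp pP uP vP pu pv uv.
have [e1 e2] := q_eqs q D0.
have pq : p != q by rewrite eq_sym.
have sg0 : sig p u v q != 0.
  rewrite /sig mulf_eq0 negb_or invr_eq0 D0 andbT.
  have := gp p q v pP qP vP pq qv pv.
  by rewrite /orient (_ : _ - _ = - ((q.1 - p.1) * (p.2 - v.2) - (q.2 - p.2) * (p.1 - v.1)));
    [rewrite oppr_eq0 | ring].
have ta0 : tau p u v q != 0.
  rewrite /tau mulf_eq0 negb_or invr_eq0 D0 andbT.
  have uq : u != q by rewrite eq_sym.
  have := gp p u q pP uP qP pu uq pq.
  by rewrite /orient (_ : _ - _ = - ((p.1 - u.1) * (q.2 - p.2) - (p.2 - u.2) * (q.1 - p.1)));
    [rewrite oppr_eq0 | ring].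
have S3u : P `\ p `\ u `\ v `<=` P `\ p `\ u by apply: fsubD1set.
have S3v : P `\ p `\ u `\ v `<=` P `\ p `\ v.
  by apply/fsubsetP => x; rewrite !in_fsetD1 => /and4P[-> _ -> ->].
case: (geo s0 t0 sg0 ta0 nboth r1 r2 e1 e2).
- move=> [a [b [c [a0 [b0 [c0 [abc [f1 f2]]]]]]]]; apply: nu.
  apply: (hull_conv3 _ _ _ a0 b0 c0 abc f1 f2).
  + by apply: hull_mem; rewrite !in_fsetD1 qu qp qP.
  + by apply: hull_mem; rewrite !in_fsetD1 eq_sym uv eq_sym pv vP.
  + exact: hull_sub S3u hr.
- move=> [a [b [c [a0 [b0 [c0 [abc [f1 f2]]]]]]]]; apply: nv.
  apply: (hull_conv3 _ _ _ a0 b0 c0 abc f1 f2).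
  + by apply: hull_mem; rewrite !in_fsetD1 uv eq_sym pu uP.
  + by apply: hull_mem; rewrite !in_fsetD1 qv qp qP.
  + exact: hull_sub S3v hr.
Qed.


Lemma in_L1 (S : {fset point R}) x :
  (x \in L1 S) = (x \in S) && `[< hull_vertex S x >].
Proof. by rewrite /L1 !inE. Qed.
Lemma in_A (S : {fset point R}) u x :
  (x \in A S u) = (x \in S) && `[< active S u x >].
Proof. by rewrite /A !inE. Qed.

Lemma act_info (P : {fset point R}) u p : u \in L1 P -> p \in A P u ->
  [/\ p \in P, p != u, in_hull (P `\ p) p & ~ in_hull (P `\ p `\ u) p].
Proof.
move=> uL; rewrite in_A => /andP[pP /asboolP [pL2 pL1]].
move: pL2; rewrite /L2 in_L1 => /andP[]; rewrite in_fsetD => /andP[pnL1 _] _.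
have nhv : ~ hull_vertex P p.
  by move=> hv; move: pnL1; rewrite in_L1 pP /=; apply/negP/negPn/asboolP.
have pu : p != u.
  by apply/eqP => e; move: pnL1; rewrite e uL.
have hp : in_hull (P `\ p) p.
  by case: (pselect (in_hull (P `\ p) p)) => // h; exfalso; apply: nhv.
split => //.
move: pL1; rewrite in_L1 => /andP[_ /asboolP [_ nh]] h; apply: nh.
apply: hull_sub h; apply/fsubsetP => x; rewrite !in_fsetD1.
by case/and3P => -> -> ->.
Qed.

End Helpers.

Theorem lemma1 (R : realFieldType) (P : {fset point R}) (u v : point R) :
  general_position P ->
  u \in L1 P -> v \in L1 P ->
  hull_adjacent P u v ->
  (#|` A P u `&` A P v| <= 1)%N.
Proof.
move=> gp uL vL [uv _].
have uP : u \in P by move: uL; rewrite in_L1 => /andP[].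
have vP : v \in P by move: vL; rewrite in_L1 => /andP[].
rewrite leqNgt; apply/negP => H.
have : A P u `&` A P v != fset0 by rewrite -cardfs_gt0 (ltn_trans _ H).
case/fset0Pn => p pX.
have : (0 < #|` (A P u `&` A P v) `\ p|)%N by move: H; rewrite (cardfsD1 p) pX.
rewrite cardfs_gt0 => /fset0Pn [q]; rewrite in_fsetD1 => /andP[qp qX].
move: pX qX; rewrite !in_fsetI => /andP[pAu pAv] /andP[qAu qAv].
have [pP pu hp nup] := act_info uL pAu.
have [_ pv _ nvp] := act_info vL pAv.
have [qP qu hq nuq] := act_info uL qAu.
have [_ qv _ nvq] := act_info vL qAv.
have pq : p != q by rewrite eq_sym.
case: (pselect (0 < sig p u v q /\ 0 < tau p u v q)) => [[h1 h2]|h].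
- apply: (final gp qP uP vP pP qu qv uv pq pu pv hq nuq nvq).
  move=> [h3 _].
  have D0 := dlt_ne0 gp pP uP vP pu pv uv.
  have [e1 e2] := q_eqs q D0.
  have := U_var h1 h2 D0 e1 e2.
  by rewrite /sig /dlt; rewrite ltNge (ltW h3).
- exact: (final gp pP uP vP qP pu pv uv qp qu qv hp nup nvp h).
Qed.
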